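(* Let $Q$ be a QNP. If a policy $\pi$ solves the FOND problem $P=T(Q)$ (i.e. is a strong cyclic solution of it), then the controller $\pi_M$ solves $Q$.
   Context: QNPs: $Q=\langle F,V,I,O,G\rangle$ with propositional variables $F$, numerical variables $V$ (non-negative reals), literals $p,\neg p$, $X=0$, $X>0$; actions with precondition $Pre(a)$, propositional effects $\mathit{Eff}(a)$, numerical effects $N(a)\subseteq\{Inc(X),Dec(X)\}$ (at most one per variable; $Dec(X)\in N(a)$ implies $X>0\in Pre(a)$). A state $s$ assigns truth values to $F$ and reals $\ge0$ to $V$; initial states satisfy $I$ (closed world); goal states satisfy $G$; for applicable $a$, $s'\in F_Q(a,s)$ iff $s'$ applies the propositional effects, $s'[X]>s[X]$ for $Inc(X)$, $s'[X]<s[X]$ for $Dec(X)$, rest unchanged. The boolean state $\bar s$ is the truth valuation of $s$ on atoms $p\in F$ and $X=0$. The FOND problem $T(Q)$: $n=|F|+|V|$, $Max=1+2^n$. Propositional variables: $F$, $p_{X=0}$ ($X\in V$; $X=0$/$X>0$ denote $p_{X=0}$/$\neg p_{X=0}$) — these make up the boolean states of $Q$ — and the memory atoms $in(X)$, $depth(d)$ ($0\le d\le|V|$), $index(X,d)$ ($1\le d\le|V|$), counters $c(d)$ ($0\le d\le|V|$), $c_T$ over $\{0,\dots,Max\}$ encoded in binary. Initial state: $I$ plus $depth(0)$, counters $0$, other memory atoms false; goal $G$. Actions: $Push(X,d)$ ($0\le d<|V|$): pre $\neg in(X),depth(d),c(d)<Max$; eff $in(X),index(X,d+1),depth(d+1),\neg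 depth(d),c(d):=c(d)+1,c(d+1):=0$. $Pop(X,d)$ ($1\le d\le|V|$): pre $in(X),index(X,d),depth(d)$; eff $\neg in(X),\neg index(X,d),\neg depth(d),depth(d-1)$. $Move$: pre $depth(0),c_T<Max$; eff $c_T:=c_T+1$. For $a\in O$ with no $Dec$ effect: action $a$ with pre $Pre(a)$ plus $\neg in(Y)$ for each $Inc(Y)\in N(a)$, eff $\mathit{Eff}(a)$ plus $Y>0$ for each $Inc(Y)\in N(a)$. For $a$ with a $Dec$ effect, $X$ with $Dec(X)\in N(a)$, $1\le d\le|V|$: action $a(X,d)$ with pre $Pre(a)$, $\neg in(Y)$ for $Inc(Y)\in N(a)$, $index(X,d)$; eff $\mathit{Eff}(a)$, $Y>0$ for $Inc(Y)\in N(a)$, nondeterministic $Z>0\mid Z=0$ for each $Dec(Z)\in N(a)$, $c(d'):=0$ for $d\le d'\le|V|$. A strong cyclic solution of a FOND problem is a policy such that from every state reachable from the initial state under $\pi$ some goal state is reachable under $\pi$. Controller $\pi_M$: a memory state $m$ is a valuation of the memory atoms, with $m_0$ the initial one; a state of $T(Q)$ is a pair $(\bar s,m)$. An execution of $\pi_M$ on $Q$ is a sequence of pairs $(s_i,m_i)$ with $s_0$ an initial state of $Q$ and $m_0$ the initial memory, where $b_i=\pi(\bar s_i,m_i)$ is defined and its preconditions hold in $(\bar s_i,m_i)$ (numerical literals evaluated in $s_i$), and: if $b_i$ is $Push$, $Pop$ or $Move$, then $s_{i+1}=s_i$ and $m_{i+1}$ results from $m_i$ by the effects of $b_i$; if $b_i$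 is $a$ or $a(X,d)$, then $s_{i+1}\in F_Q(a,s_i)$ and $m_{i+1}$ results from $m_i$ by the counter effects of $b_i$. For $\epsilon>0$ the execution is an $\epsilon$-execution if each change of a numerical variable has magnitude $\ge\epsilon$ unless it goes from a value $<\epsilon$ to $0$. It is maximal if infinite without goal, ending at its first pair with $s_i$ a goal state, or ending where $\pi$ is undefined or its action inapplicable. $\pi_M$ solves $Q$ iff for every $\epsilon>0$ every maximal $\epsilon$-execution reaches a pair whose $Q$-state is a goal state. *)

(* Defs.v *)
From HB Require Import structures.
From mathcomp Require Import all_boot all_order all_algebra.
From mathcomp Require Import reals.
From Stdlib Require Import Relations.
From Stdlib Require List.

Set Implicit Arguments.
Unset Strict Implicit.
Unset Printing Implicit Defensive.

Import Order.TTheory GRing.Theory Num.Theory.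

(* Literals: [PLit p true] is p, [PLit p false] is ~p;
   [NLit X true] is X = 0, [NLit X false] is X > 0. *)
Inductive lit (F V : Type) :=
| PLit of F & bool
| NLit of V & bool.
Arguments PLit {F V}.
Arguments NLit {F V}.

Inductive neff := NoEff | Inc | Dec.

Record QNP := {
  qF : finType;
  qV : finType;
  qO : finType;
  qI : seq (lit qF qV);
  qG : seq (lit qF qV);
  qPre : qO -> seq (lit qF qV);
  qEff : qO -> seq (qF * bool);
  qN : qO -> qV -> neff;
  qN_dec_pre : forall a X, qN a X = Dec -> List.In (NLit X false) (qPre a)
}.

Section QNPSemantics.
Variable Q : QNP.
Local Notation F := (qF Q).
Local Notation V := (qV Q).
Local Notation O := (qO Q).

(* Boolean states: truth values of the atoms p (p in F) and X = 0 (X in V).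
   These are also the boolean part of the states of T(Q). *)
Record bstate := { bF : F -> bool; bZ : V -> bool }.

Definition bsat_lit (b : bstate) (l : lit F V) : Prop :=
  match l with
  | PLit p v => bF b p = v
  | NLit X z => bZ b X = z
  end.

Definition bsat (b : bstate) (L : seq (lit F V)) : Prop :=
  forall l, List.In l L -> bsat_lit b l.

Definition cw_sat (L : seq (lit F V)) (b : bstate) : Prop :=
  bsat b L /\
  (forall p, bF b p = true -> List.In (PLit p true) L) /\
  (forall X, bZ b X = true -> List.In (NLit X true) L).

Variable R : realType.

Record qstate := { sF : F -> bool; sV : V -> R }.

Definition qvalid (s : qstate) : Prop := forall X, (0 <= sV s X)%R.

Definition bar (s : qstate) : bstate :=
  {| bF := sF s; bZ := fun X => sV s X == 0%R |}.

Definition qinit (s : qstate) : Prop := qvalid s /\ cw_sat (qI Q) (bar s).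
Definition qgoal (s : qstate) : Prop := bsat (bar s) (qG Q).

(* s' in F_Q(a, s)  (applicability of a is checked separately) *)
Definition qsucc (a : O) (s s' : qstate) : Prop :=
  qvalid s' /\
  (forall p v, List.In (p, v) (qEff a) -> sF s' p = v) /\
  (forall p, (forall v, ~ List.In (p, v) (qEff a)) -> sF s' p = sF s p) /\
  (forall X, match qN a X with
             | Inc => (sV s X < sV s' X)%R
             | Dec => (sV s' X < sV s X)%R
             | NoEff => sV s' X = sV s X
             end).

End QNPSemantics.

Record FOND := {
  fst_ : Type;
  fact : Type;
  finit : fst_ -> Prop;
  fgoal : fst_ -> Prop;
  fapp : fact -> fst_ -> Prop;
  fsucc : fact -> fst_ -> fst_ -> Prop
}.

Definition fpolicy (P : FOND) := fst_ P -> option (fact P).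

Definition pstep (P : FOND) (pi : fpolicy P) (s s' : fst_ P) : Prop :=
  ~ fgoal s /\ exists a, pi s = Some a /\ fapp a s /\ fsucc a s s'.

Definition preach (P : FOND) (pi : fpolicy P) : relation (fst_ P) :=
  clos_refl_trans (fst_ P) (pstep pi).

Definition strong_cyclic (P : FOND) (pi : fpolicy P) : Prop :=
  forall s0 s, finit s0 -> preach pi s0 s ->
    exists g, preach pi s g /\ fgoal g.

Section Translation.
Variable Q : QNP.
Local Notation F := (qF Q).
Local Notation V := (qV Q).
Local Notation O := (qO Q).

Definition nV : nat := #|V|.
Definition Max : nat := 1 + 2 ^ (#|F| + #|V|).

(* Memory states: valuations of in(X), depth(d), index(X,d) and the
   counters c(d), c_T (values in {0..Max}, kept as naturals).  Only the
   indices 0 <= d <= |V| are meaningful; the others are never touched. *)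
Record mem := {
  m_in : V -> bool;
  m_depth : nat -> bool;
  m_index : V -> nat -> bool;
  m_c : nat -> nat;
  m_cT : nat
}.

Definition m0 : mem :=
  {| m_in := fun _ => false; m_depth := fun d => d == 0;
     m_index := fun _ _ => false; m_c := fun _ => 0; m_cT := 0 |}.

Definition push_mem (X : V) (d : nat) (m : mem) : mem :=
  {| m_in := fun Y => if Y == X then true else m_in m Y;
     m_depth := fun k => if k == d.+1 then true
                         else if k == d then false else m_depth m k;
     m_index := fun Y k => if (Y == X) && (k == d.+1) then true
                           else m_index m Y k;
     m_c := fun k => if k == d then (m_c m d).+1
                     else if k == d.+1 then 0 else m_c m k;
     m_cT := m_cT m |}.

Definition pop_mem (X : V) (d : nat) (m : mem) : mem :=
  {| m_in := fun Y => if Y == X then false else m_in m Y;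
     m_depth := fun k => if k == d then false
                         else if k == d.-1 then true else m_depth m k;
     m_index := fun Y k => if (Y == X) && (k == d) then false
                           else m_index m Y k;
     m_c := m_c m;
     m_cT := m_cT m |}.

Definition move_mem (m : mem) : mem :=
  {| m_in := m_in m; m_depth := m_depth m; m_index := m_index m;
     m_c := m_c m; m_cT := (m_cT m).+1 |}.

Definition reset_mem (d : nat) (m : mem) : mem :=
  {| m_in := m_in m; m_depth := m_depth m; m_index := m_index m;
     m_c := fun k => if (d <= k) && (k <= nV) then 0 else m_c m k;
     m_cT := m_cT m |}.

Inductive tact :=
| Push of V & nat
| Pop of V & nat
| Move
| Act of O
| ActD of O & V & nat.

Definition tstate := (bstate Q * mem)%type.

Definition tpre_a (a : O) (t : tstate) : Prop :=
  bsat t.1 (qPre a) /\ (forall Y, qN a Y = Inc -> m_in t.2 Y = false).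

(* boolean effects of a / a(X,d): Eff(a), Y>0 for Inc(Y), the atom X=0 is
   nondeterministic for Dec(X), everything else unchanged *)
Definition beff (a : O) (b b' : bstate Q) : Prop :=
  (forall p v, List.In (p, v) (qEff a) -> bF b' p = v) /\
  (forall p, (forall v, ~ List.In (p, v) (qEff a)) -> bF b' p = bF b p) /\
  (forall Y, qN a Y = Inc -> bZ b' Y = false) /\
  (forall Y, qN a Y = NoEff -> bZ b' Y = bZ b Y).

Definition tapp (b : tact) (t : tstate) : Prop :=
  let m := t.2 in
  match b with
  | Push X d => d < nV /\ m_in m X = false /\ m_depth m d /\ m_c m d < Max
  | Pop X d => 1 <= d <= nV /\ m_in m X /\ m_index m X d /\ m_depth m d
  | Move => m_depth m 0 /\ m_cT m < Max
  | Act a => (forall Y, qN a Y <> Dec) /\ tpre_a a t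
  | ActD a X d => qN a X = Dec /\ 1 <= d <= nV /\ tpre_a a t /\ m_index m X d
  end.

Definition tsucc (b : tact) (t t' : tstate) : Prop :=
  match b with
  | Push X d => t'.1 = t.1 /\ t'.2 = push_mem X d t.2
  | Pop X d => t'.1 = t.1 /\ t'.2 = pop_mem X d t.2
  | Move => t'.1 = t.1 /\ t'.2 = move_mem t.2
  | Act a => beff a t.1 t'.1 /\ t'.2 = t.2
  | ActD a X d => beff a t.1 t'.1 /\ t'.2 = reset_mem d t.2
  end.

Definition tinit (t : tstate) : Prop := cw_sat (qI Q) t.1 /\ t.2 = m0.
Definition tgoal (t : tstate) : Prop := bsat t.1 (qG Q).

Definition TQ : FOND :=
  {| fst_ := tstate; fact := tact; finit := tinit; fgoal := tgoal;
     fapp := tapp; fsucc := tsucc |}.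

Variable R : realType.
Local Notation qst := (qstate Q R).

Definition cstep (pi : fpolicy TQ) (x y : qst * mem) : Prop :=
  let (s, m) := x in let (s', m') := y in
  exists b, pi (bar s, m) = Some b /\ tapp b (bar s, m) /\
  match b with
  | Push X d => s' = s /\ m' = push_mem X d m
  | Pop X d => s' = s /\ m' = pop_mem X d m
  | Move => s' = s /\ m' = move_mem m
  | Act a => qsucc a s s' /\ m' = m
  | ActD a X d => qsucc a s s' /\ m' = reset_mem d m
  end.

(* A (finite or infinite) sequence of pairs: [f i] for [i] in the index set,
   which is {0..n} if [len = Some n] and all of nat if [len = None]. *)
Definition within (len : option nat) (i : nat) : Prop :=
  match len with None => True | Some n => i <= n end.

Definition is_exec (pi : fpolicy TQ) (f : nat -> qst * mem) (len : option nat)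
  : Prop :=
  qinit (f 0).1 /\ (f 0).2 = m0 /\
  forall i, within len i.+1 -> cstep pi (f i) (f i.+1).

Definition eps_step (eps : R) (s s' : qst) : Prop :=
  forall X, sV s' X <> sV s X ->
    (eps <= `|sV s' X - sV s X|)%R \/
    ((sV s X < eps)%R /\ sV s' X = 0%R).

Definition is_eps_exec (pi : fpolicy TQ) (eps : R) (f : nat -> qst * mem)
  (len : option nat) : Prop :=
  is_exec pi f len /\
  forall i, within len i.+1 -> eps_step eps (f i).1 (f i.+1).1.

Definition is_maximal (pi : fpolicy TQ) (f : nat -> qst * mem)
  (len : option nat) : Prop :=
  match len with
  | None => forall i, ~ qgoal (f i).1
  | Some n =>
      (qgoal (f n).1 /\ forall i, i < n -> ~ qgoal (f i).1) \/
      ~ (exists b, pi (bar (f n).1, (f n).2) = Some b /\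
                   tapp b (bar (f n).1, (f n).2))
  end.

Definition controller_solves (pi : fpolicy TQ) : Prop :=
  forall eps : R, (0 < eps)%R ->
  forall f len, is_eps_exec pi eps f len -> is_maximal pi f len ->
    exists i, within len i /\ qgoal (f i).1.

End Translation.

(* Main.v *)
Require Import Defs.
From mathcomp Require Import all_boot all_order all_algebra reals.
From mathcomp Require Import lra zify.
From Stdlib Require Import Classical FunctionalExtensionality Relations.
From Stdlib Require List.
Set Implicit Arguments. Unset Strict Implicit. Unset Printing Implicit Defensive.
Import Order.TTheory GRing.Theory Num.Theory.

Section Pf.
Variable Q : QNP.
Local Notation V := (qV Q).
Local Notation nv := (nV Q).

Definition dep (m : Defs.mem Q) : nat := find (m_depth m) (iota 0 nv.+1).

Lemma find_iota_gen (P : pred nat) D n a :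
  (forall k, P k = (k == D)) -> a <= D < a + n -> find P (iota a n) = D - a.
Proof.
move=> HP; elim: n a => [|n IH] a /=; first lia.
move=> H; rewrite HP; case: eqP => [->|ne]; first lia.
rewrite IH; lia.
Qed.

Lemma dep_eq m D : (forall k, m_depth m k = (k == D)) -> D <= nv -> dep m = D.
Proof. move=> H HD; rewrite /dep (find_iota_gen (D:=D)) //; lia. Qed.

Definition Inv (m : Defs.mem Q) : Prop :=
  (forall k, m_depth m k = (k == dep m)) /\ dep m <= nv /\
  (forall Y k, m_index m Y k -> (1 <= k <= dep m) && m_in m Y) /\
  (forall Y k k', m_index m Y k -> m_index m Y k' -> k = k') /\
  (forall Y Y' k, m_index m Y k -> m_index m Y' k -> Y = Y').

Definition mstep (b : tact Q) (m : Defs.mem Q) : Defs.mem Q :=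
  match b with
  | Push X d => push_mem X d m
  | Pop X d => pop_mem X d m
  | Move => move_mem m
  | Act _ => m
  | ActD _ _ d => reset_mem d m
  end.

Lemma Inv_m0 : Inv (m0 Q).
Proof.
have Hd : dep (m0 Q) = 0 by apply: dep_eq.
rewrite /Inv Hd; split=> //=.
Qed.

Lemma Inv_step b bs m : Inv m -> tapp b (bs, m) -> Inv (mstep b m).
Proof.
case=> [Hd [HD [I2 [I3 I4]]]].
case: b => [X d|X d||a|a X d] /=.
- case=> [dlt [inX [depd cd]]].
  have Ed : d = dep m by move: depd; rewrite Hd => /eqP.
  have Hdk : forall k, m_depth (push_mem X d m) k = (k == d.+1).
    move=> k /=; rewrite Hd -Ed; (do ! case: ifP => /eqP ?); lia.
  have Hd' : dep (push_mem X d m) = d.+1 by apply: dep_eq; last lia.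
  rewrite /Inv Hd'; split; first by [].
  split; first lia.
  split.
    move=> Y k /=; case: (eqVneq Y X) => [->|neY] /=.
      case: (eqVneq k d.+1) => [->|nek] /=; first by rewrite leqnn.
      move/I2; rewrite inX; by case/andP.
    move/I2=> /andP[/andP [H1 H2] ->]; rewrite andbT; apply/andP; split=> //; lia.
  split.
    move=> Y k k' /=; case: (eqVneq Y X) => [->|neY] /=.
      case: (eqVneq k d.+1) => [->|nek]; case: (eqVneq k' d.+1) => [->|nek'] //=.
      + by move=> _ /I2; rewrite inX andbF.
      + by move=> /I2; rewrite inX andbF.
      + by apply: I3.
    by apply: I3.
  move=> Y Y' k /=.
  case: (eqVneq Y X) => [->|neY]; case: (eqVneq Y' X) => [->|neY'] //=;
    case: (eqVneq k d.+1) => [->|nek] //=.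
  all: try first [by apply: I4 | by move=> _ /I2 /andP[/andP[_ ]]; lia | by move=> /I2 /andP[/andP[_ ]]; lia].
- case=> [/andP[d1 dle] [inX [ixd depd]]].
  have Ed : d = dep m by move: depd; rewrite Hd => /eqP.
  have Hdk : forall k, m_depth (pop_mem X d m) k = (k == d.-1).
    move=> k /=; rewrite Hd -Ed; (do ! case: ifP => /eqP ?); lia.
  have Hd' : dep (pop_mem X d m) = d.-1 by apply: dep_eq; last lia.
  have Hsub : forall Y k, m_index (pop_mem X d m) Y k -> m_index m Y k.
    by move=> Y k /=; case: ifP.
  rewrite /Inv Hd'; split; first by [].
  split; first lia.
  split.
    move=> Y k /=; case: (eqVneq Y X) => [->|neY] /=.
      case: (eqVneq k d) => [->|nek] //= H.
      by move: nek; rewrite (I3 _ _ _ H ixd) eqxx.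
    move=> H; have /andP[/andP[H1 H2] ->] := I2 _ _ H; rewrite andbT.
    case: (eqVneq k d) => [Ek|nek]; last by apply/andP; split; lia.
    by move: H; rewrite Ek => /(I4 _ _ _ ixd) E; rewrite E eqxx in neY.
  split.
    move=> Y k k' /Hsub H /Hsub H'; exact: I3 H H'.
  move=> Y Y' k /Hsub H /Hsub H'; exact: I4 H H'.
- move=> _; by rewrite /Inv /dep /=; split.
- move=> _; by split.
- move=> _; by rewrite /Inv /dep /=; split.
Qed.


Lemma depth_eq m bs X d : Inv m -> tapp (Push X d) (bs, m) -> d = dep m.
Proof. by case=> Hd _ [_ [_ [H _]]]; move: H; rewrite Hd => /eqP. Qed.

Lemma dep_push m bs X d : Inv m -> tapp (Push X d) (bs, m) ->
  dep (push_mem X d m) = (dep m).+1.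
Proof.
move=> HI Ht; have Ed := depth_eq HI Ht.
case: HI => Hd [HD _]; case: Ht => dlt _.
apply: dep_eq; last by lia.
move=> k /=; rewrite Hd -Ed; (do ! case: ifP => /eqP ?); lia.
Qed.

Lemma dep_pop m bs X d : Inv m -> tapp (Pop X d) (bs, m) ->
  d = dep m /\ 1 <= d /\ dep (pop_mem X d m) = (dep m).-1.
Proof.
case=> Hd [HD _] [/andP[d1 dle] [_ [_ depd]]].
have Ed : d = dep m by move: depd; rewrite Hd => /eqP.
split=> //; split=> //.
apply: dep_eq; last by lia.
move=> k /=; rewrite Hd -Ed; (do ! case: ifP => /eqP ?); lia.
Qed.

Lemma actd_le m bs a X k : Inv m -> tapp (ActD a X k) (bs, m) -> k <= dep m.
Proof.
case=> _ [_ [I2 _]] [_ [_ [_ H]]].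
by have /andP[/andP[_ ->] _] := I2 _ _ H.
Qed.

Variable R : realType.
Variable pi : fpolicy (TQ Q).
Local Notation qst := (qstate Q R).

Definition tst (x : qst * Defs.mem Q) : fst_ (TQ Q) := (bar x.1, x.2).

Definition qrel (b : tact Q) (s s' : qst) : Prop :=
  match b with
  | Act a => qsucc a s s'
  | ActD a _ _ => qsucc a s s'
  | _ => s' = s
  end.

Lemma step_info x y : cstep pi x y -> exists b, pi (tst x) = Some b /\
  tapp b (tst x) /\ y.2 = mstep b x.2 /\ qrel b x.1 y.1.
Proof.
case: x y => s m [s' m']; rewrite /cstep; case=> b [H1 [H2 H3]].
exists b; split=> //; split=> //.
by case: b {H1 H2} H3 => [X d|X d||a|a X d] [H3 H4]; split.
Qed.

Lemma qrel_valid b s s' : qrel b s s' -> qvalid s -> qvalid s'.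
Proof. by case: b => [X d|X d||a|a X d] /=; try (by move=> ->); case. Qed.

Lemma qsucc_beff a (s s' : qst) : qsucc a s s' -> qvalid s -> beff a (bar s) (bar s').
Proof.
case=> _ [H1 [H2 H3]] Hv; split; first exact H1.
split; first exact H2.
split.
  move=> Y HY /=; have := H3 Y; rewrite HY => lt.
  apply/negbTE/eqP => E; have := Hv Y; rewrite E in lt; move=> h; clear -lt h; lra.
by move=> Y HY /=; have := H3 Y; rewrite HY => ->.
Qed.

Lemma tsucc_of b s s' m m' : qrel b s s' -> m' = mstep b m -> qvalid s ->
  tsucc b (bar s, m) (bar s', m').
Proof.
case: b => [X d|X d||a|a X d] /= Hq -> Hv; try by rewrite Hq.
- by split=> //; apply: qsucc_beff.
- by split=> //; apply: qsucc_beff.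
Qed.

Lemma beff_det (a : qO Q) (b b1 b2 : bstate Q) : (forall Y, qN a Y <> Dec) ->
  beff a b b1 -> beff a b b2 -> b1 = b2.
Proof.
move=> Hnd [E1 [F1 [I1 N1]]] [E2 [F2 [I2 N2]]].
case: b1 E1 F1 I1 N1 => f1 z1 E1 F1 I1 N1; case: b2 E2 F2 I2 N2 => f2 z2 E2 F2 I2 N2.
f_equal; apply: functional_extensionality => x.
- case: (classic (exists v, List.In (x, v) (qEff a))) => [[v Hv]|Hn].
    by move: (E1 _ _ Hv) (E2 _ _ Hv) => /= -> ->.
  have Hn' : forall v, ~ List.In (x, v) (qEff a) by move=> v Hv; apply: Hn; exists v.
  by move: (F1 _ Hn') (F2 _ Hn') => /= -> ->.
- case E: (qN a x); [by move: (N1 _ E) (N2 _ E) => /= -> ->|by move: (I1 _ E) (I2 _ E) => /= -> ->|by case: (Hnd x)].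
Qed.

Lemma within_pred len i : within len i.+1 -> within len i.
Proof. by case: len => //= n; lia. Qed.

Lemma exec_valid (f : nat -> qst * Defs.mem Q) len : is_exec pi f len -> forall i, within len i -> qvalid (f i).1.
Proof.
case=> [[Hv _] [_ Hs]]; elim=> [|i IH] Hw //.
have [b [_ [_ [_ Hq]]]] := step_info (Hs i Hw).
exact: qrel_valid Hq (IH (within_pred Hw)).
Qed.

Lemma exec_reach (f : nat -> qst * Defs.mem Q) len : is_exec pi f len -> forall i, within len i ->
  (forall j, j < i -> ~ qgoal (f j).1) -> preach pi (tst (f 0)) (tst (f i)).
Proof.
move=> Hex; have Hv := exec_valid Hex; case: Hex => [_ [_ Hs]].
elim=> [|i IH] Hw Hng; first exact: rt_refl.
apply: rt_trans (IH (within_pred Hw) (fun j hj => Hng j (ltnW hj))) _.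
apply: rt_step.
have [b [Hb [Ha [Hm Hq]]]] := step_info (Hs i Hw).
split; first exact: (Hng i (ltnSn i)).
exists b; split=> //; split=> //.
case E: (f i) Hq Hm Ha Hb => [s m]; case E': (f i.+1) => [s' m'] /= Hq Hm Ha Hb.
apply: tsucc_of => //.
by have := Hv i (within_pred Hw); rewrite E.
Qed.

Lemma exec_init (f : nat -> qst * Defs.mem Q) len : is_exec pi f len -> finit (tst (f 0)).
Proof. by case=> [[_ Hc] [Hm _]]; split. Qed.


Lemma largest (P : nat -> Prop) B : P 0 -> ~ P B -> exists d, d < B /\ P d /\ ~ P d.+1.
Proof.
elim: B => [|B IH] H0 HB; first by [].
case: (classic (P B)) => HPB; first by exists B.
have [d [? ?]] := IH H0 HPB; exists d; split=> //; lia.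
Qed.

Lemma nat_potential (c : nat -> nat) (E : nat -> Prop) M B :
  (forall i, M <= i -> c i <= c i.+1) ->
  (forall i, M <= i -> E i -> c i < B /\ c i < c i.+1) ->
  exists T, forall j, T <= j -> ~ E j.
Proof.
move=> Hmon HE.
have Hm : forall i j, M <= i -> i <= j -> c i <= c j.
  move=> i j Hi; elim: j => [|j IH] Hj; first by have -> : i = 0 by lia.
  case: (eqVneq i j.+1) => [->//|ne]; have := Hmon j; have := IH; lia.
suff: forall n i, M <= i -> B - c i <= n -> exists T, forall j, T <= j -> ~ E j.
  by move/(_ (B - c M) M (leqnn _) (leqnn _)).
elim=> [|n IH] i Hi Hn.
  exists i => j Hj Ej; have [h1 _] := HE j (leq_trans Hi Hj) Ej.
  have := Hm i j Hi Hj; lia.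
case: (classic (exists j, i <= j /\ E j)) => [[j [Hj Ej]]|Hno].
  have [h1 h2] := HE j (leq_trans Hi Hj) Ej.
  apply: (IH j.+1); first lia.
  have := Hm i j Hi Hj; lia.
by exists i => j Hj Ej; apply: Hno; exists j.
Qed.

Lemma pigeon (E : nat -> V -> Prop) :
  (forall N, exists i, N <= i /\ exists X, E i X) ->
  exists X, forall N, exists i, N <= i /\ E i X.
Proof.
move=> H; apply: NNPP => Hn.
have Hb : forall X, exists N, forall i, N <= i -> ~ E i X.
  move=> X; apply: NNPP => HX; apply: Hn; exists X => N.
  apply: NNPP => H2; apply: HX; exists N => i Hi Ei; apply: H2; by exists i.
suff [N HN] : exists N, forall i, N <= i -> forall X, X \in enum V -> ~ E i X.
  have [i [Hi [X EX]]] := H N; exact: HN i Hi X (mem_enum _ X) EX.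
elim: (enum V) => [|X l [N HN]]; first by exists 0.
have [NX HX] := Hb X.
exists (maxn N NX) => i Hi Y; rewrite in_cons => /orP[/eqP ->|HY].
  apply: HX; lia.
apply: HN => //; lia.
Qed.

Lemma real_potential (v : nat -> R) eps M : (0 < eps)%R ->
  (forall i, (0 <= v i)%R) ->
  (forall i, M <= i -> (v i.+1 <= v i)%R) ->
  (forall i, M <= i -> v i.+1 <> v i ->
     (eps <= `|v i.+1 - v i|)%R \/ ((v i < eps)%R /\ v i.+1 = 0%R)) ->
  exists T, forall j, T <= j -> ~ (v j.+1 < v j)%R.
Proof.
move=> ep Hpos Hmon Heps.
have Hm : forall i j, M <= i -> i <= j -> (v j <= v i)%R.
  move=> i j Hi; elim: j => [|j IH] Hj; first by have -> : i = 0 by lia.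
  case: (eqVneq i j.+1) => [->//|ne].
  have Hij : i <= j by lia.
  exact: le_trans (Hmon j (leq_trans Hi Hij)) (IH Hij).
suff: forall n i, M <= i -> (v i <= n%:R * eps)%R ->
  exists T, forall j, T <= j -> ~ (v j.+1 < v j)%R.
  move=> H; apply: (H (Num.Def.archi_bound (v M / eps)) M (leqnn _)).
  have := archi_boundP (divr_ge0 (Hpos M) (ltW ep)).
  by rewrite ltr_pdivrMr // => /ltW.
elim=> [|n IH] i Hi Hn.
  exists i => j Hj Hlt; have := Hm i j Hi Hj; have := Hpos j.+1.
  rewrite mul0r in Hn; move=> a b; clear -a b Hn Hlt; lra.
case: (classic (exists j, i <= j /\ (v j.+1 < v j)%R)) => [[j [Hj Hlt]]|Hno]; last first.
  by exists i => j Hj Hlt; apply: Hno; exists j.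
apply: (IH j.+1); first lia.
have Hji := Hm i j Hi Hj.
have Hn0 : (0 <= n%:R * eps)%R by apply: mulr_ge0 => //; apply: ltW.
move: Hn; rewrite -addn1 natrD mulrDl mul1r => Hn.
have Hne : v j.+1 <> v j by move=> E; rewrite E ltxx in Hlt.
case: (Heps j (leq_trans Hi Hj) Hne) => [|[_ ->]]; last by [].
rewrite ltr0_norm; last by rewrite subr_lt0.
move=> h; clear -h Hji Hn; lra.
Qed.


Unset Implicit Arguments.
Section Inf.
Hypothesis Hsc : strong_cyclic pi.
Variable eps : R.
Hypothesis epos : (0 < eps)%R.
Variable f : nat -> qst * Defs.mem Q.
Hypothesis Hex : is_exec pi f None.
Hypothesis Heps : forall i, eps_step eps (f i).1 (f i.+1).1.
Hypothesis Hng : forall i, ~ qgoal (f i).1.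

Lemma Fstep i : exists b, pi (tst (f i)) = Some b /\ tapp b (tst (f i)) /\
  (f i.+1).2 = mstep b (f i).2 /\ qrel b (f i).1 (f i.+1).1.
Proof. case: Hex => [_ [_ Hs]]; exact: step_info (Hs i I). Qed.

Lemma Fvalid i : qvalid (f i).1.
Proof. exact: exec_valid Hex i I. Qed.

Lemma Finv i : Inv (f i).2.
Proof.
elim: i => [|i IH]; first by case: Hex => [_ [-> _]]; apply: Inv_m0.
have [b [_ [Ha [-> _]]]] := Fstep i; exact: Inv_step IH Ha.
Qed.

Lemma Fdet : (exists T, forall i, T <= i -> exists a, pi (tst (f i)) = Some (Act a)) -> False.
Proof.
case=> T HT.
have Hr := exec_reach Hex (i:=T) I (fun j _ => Hng j).
have [g [Hrg Hgg]] := Hsc _ _ (exec_init Hex) Hr.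
suff H : forall x y, clos_refl_trans_1n _ (pstep pi) x y ->
    forall i, T <= i -> x = tst (f i) -> exists j, y = tst (f j).
  have [j Ej] := H _ _ (clos_rt_rt1n _ _ _ _ Hrg) T (leqnn T) erefl.
  by apply: (Hng j); rewrite Ej in Hgg.
move=> x y; elim=> [x0|x0 y0 z0 Hst _ IH] i Hi Ex; first by exists i.
subst x0.
case: Hst => _ [a' [Ha' [_ Hs']]].
have [a Ha] := HT i Hi.
rewrite Ha in Ha'; case: Ha' => Ea'; subst a'.
have [b [Hb [Happ [Hm Hq]]]] := Fstep i.
rewrite Ha in Hb; case: Hb => Eb; subst b.
apply: (IH i.+1); first lia.
clear IH.
case: y0 Hs' => yb ym /= [Hbe ->].
rewrite /tst Hm /=; f_equal.
exact: beff_det (proj1 Happ) Hbe (qsucc_beff Hq (Fvalid i)).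
Qed.

Lemma Finf : False.
Proof.
pose D i := dep (f i).2.
have HDle : forall i, D i <= nv by move=> i; have [_ [h _]] := Finv i.
pose P d := exists N, forall i, N <= i -> d <= D i.
have HP0 : P 0 by exists 0.
have HPB : ~ P nv.+1.
  by move=> [N' H']; have := H' N' (leqnn _); have := HDle N'; lia.
have [d [dlt [[N HN] HnP]]] := largest HP0 HPB.
have Hio : forall M, exists i, M <= i /\ D i = d.
  move=> M; apply: NNPP => H; apply: HnP; exists (maxn M N) => i Hi.
  apply: NNPP => H2; apply: H; exists i; split; first lia.
  have := HN i (leq_trans (leq_maxr _ _) Hi); lia.
case: (classic (forall M, exists i, M <= i /\ exists a X k,
   pi (tst (f i)) = Some (ActD a X k) /\ k <= d)) => [HA|HB].
- have Hpg : forall M, exists i, M <= i /\ exists X, N <= i /\ exists a k,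
      pi (tst (f i)) = Some (ActD a X k) /\ k <= d.
    move=> M; have [i [Hi [a [X [k [Hk kd]]]]]] := HA (maxn M N).
    exists i; split; first lia. exists X; split; first lia. by exists a, k.
  have [X HX] := pigeon (E := fun i X => N <= i /\ exists a k,
      pi (tst (f i)) = Some (ActD a X k) /\ k <= d) Hpg.
  have [j0 [_ [Nj0 [a0 [k0 [Hk0 k0d]]]]]] := HX 0.
  have Hix0 : m_index (f j0).2 X k0.
    have [b [Hb [Happ _]]] := Fstep j0.
    rewrite Hk0 in Hb; case: Hb => <-{b} in Happ.
    by case: Happ => _ [_ [_ ->]].
  have Hidx : forall j, j0 <= j -> m_index (f j).2 X k0.
    elim=> [|j IH] Hj; first by move: Hj; rewrite leqn0 => /eqP <-.
    case: (eqVneq j0 j.+1) => [<-//|ne].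
    have Hj' : j0 <= j by lia.
    have HI := Finv j.
    have := IH Hj'.
    have [b [_ [Happ [Hm _]]]] := Fstep j.
    have := HN j.+1 (leq_trans Nj0 (leq_trans Hj' (leqnSn _))).
    rewrite /D Hm.
    case: b Happ Hm => [Y d'|Y d'||a|a Y k] Happ Hm h //= H.
    + by rewrite H; case: ifP.
    + have [Ed [d1 Hd']] := dep_pop HI Happ.
      rewrite Hd' in h.
      have -> : (k0 == d') = false by apply/eqP; lia.
      by rewrite andbF.
  have Hin : forall j, j0 <= j -> m_in (f j).2 X.
    move=> j Hj; have [_ [_ [I2 _]]] := Finv j.
    by have /andP[_ ->] := I2 _ _ (Hidx j Hj).
  pose v j := sV (f j).1 X.
  have Hmon : forall j, j0 <= j -> (v j.+1 <= v j)%R /\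
      (forall a k, pi (tst (f j)) = Some (ActD a X k) -> (v j.+1 < v j)%R).
    move=> j Hj; have HinX := Hin j Hj.
    have [b [Hb [Happ [_ Hq]]]] := Fstep j.
    case: b Hb Happ Hq => [Y d'|Y d'||a|a Y k] Hb Happ Hq /=.
    + by rewrite /v Hq; split=> // a k; rewrite Hb.
    + by rewrite /v Hq; split=> // a k; rewrite Hb.
    + by rewrite /v Hq; split=> // a k; rewrite Hb.
    + split; last by move=> ? ?; rewrite Hb.
      case: Happ => Hnd [_ Hinc]; case: Hq => _ [_ [_ H3]]; have := H3 X.
      rewrite /v; case E: (qN a X) => /=.
      * by move=> ->.
      * by move: (Hinc X E); rewrite HinX.
      * by case: (Hnd X).
    + case: Happ => HdY [_ [[_ Hinc] _]]; case: Hq => _ [_ [_ H3]]; have := H3 X.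
      rewrite /v; case E: (qN a X) => /=.
      * move=> ->; split=> // a' k' Hb'; rewrite Hb in Hb'; case: Hb' => Ea EY _.
        by subst a' Y; rewrite HdY in E.
      * by move: (Hinc X E); rewrite HinX.
      * by move=> h; split=> //; apply: ltW.
  have [T HT] := real_potential (v := v) (M := j0) epos (fun i => Fvalid i X)
      (fun j Hj => proj1 (Hmon j Hj)) (fun j _ => Heps j X).
  have [i [Hi [_ [a [k [Hk _]]]]]] := HX (maxn T j0).
  apply: (HT i); first lia.
  exact: (proj2 (Hmon i (leq_trans (leq_maxr _ _) Hi)) a k Hk).
- have [M HM] : exists M, forall i, M <= i -> forall a X k,
      pi (tst (f i)) = Some (ActD a X k) -> d < k.
    apply: NNPP => H; apply: HB => M'; apply: NNPP => H2; apply: H.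
    exists M' => i Hi a X k Hk; apply: NNPP => H3; apply: H2.
    exists i; split=> //; exists a, X, k; split=> //; lia.
  have [T1 HT1] : exists T, forall j, T <= j -> ~ (exists X, pi (tst (f j)) = Some (Push X d)).
    apply: (nat_potential (c := fun i => m_c (f i).2 d) (M := maxn M N) (B := Max Q)).
  + move=> i Hi; have HI := Finv i; have HNi := HN i (leq_trans (leq_maxr _ _) Hi).
    have [b [Hb [Happ [-> _]]]] := Fstep i.
    case: b Hb Happ => [Y d'|Y d'||a|a Y k] Hb Happ //=.
    * have Ed := depth_eq HI Happ; rewrite /D in HNi.
      (do ! case: ifP => /eqP ?); try subst; lia.
    * have := HM i (leq_trans (leq_maxl _ _) Hi) _ _ _ Hb.
      case: ifP => [/andP [h1 h2]|//]; lia.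
  + move=> i Hi [X HX].
    have [b [Hb [Happ [-> _]]]] := Fstep i.
    rewrite HX in Hb; case: Hb => <-{b} in Happ *.
    case: Happ => _ [_ [_ Hc]]; rewrite /= eqxx; split=> //.
  have [T2 HT2] : exists T, forall j, T <= j -> ~ (pi (tst (f j)) = Some (Move Q)).
    apply: (nat_potential (c := fun i => m_cT (f i).2) (M := 0) (B := Max Q)).
  + move=> i _; have [b [Hb [Happ [-> _]]]] := Fstep i.
    by case: b Hb Happ => [Y d'|Y d'||a|a Y k] Hb Happ //=.
  + move=> i _ HX; have [b [Hb [Happ [-> _]]]] := Fstep i.
    rewrite HX in Hb; case: Hb => <-{b} in Happ *.
    by case: Happ => _ Hc; split.
  have [i0 [Hi0 Di0]] := Hio (maxn (maxn M N) (maxn T1 T2)).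
  have Hst : forall j, i0 <= j -> D j = d ->
      D j.+1 = d /\ exists a, pi (tst (f j)) = Some (Act a).
    move=> j Hj Dj; have HI := Finv j.
    have [b [Hb [Happ [Hm _]]]] := Fstep j.
    case: b Hb Happ Hm => [Y d'|Y d'||a|a Y k] Hb Happ Hm.
    + have Ed := depth_eq HI Happ.
      exfalso; apply: (HT1 j); first lia.
      by exists Y; rewrite /D in Dj; rewrite Hb Ed Dj.
    + have [Ed [d1 Hd']] := dep_pop HI Happ.
      have := HN j.+1 (leq_trans (leq_maxr _ _) (leq_trans (leq_maxl _ _) (leq_trans Hi0 (leq_trans Hj (leqnSn _))))).
      rewrite /D Hm Hd'; rewrite /D in Dj; lia.
    + exfalso; apply: (HT2 j); first lia. exact: Hb.
    + by split; [rewrite /D Hm|exists a].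
    + have := actd_le HI Happ; have := HM j _ _ _ _ Hb.
      rewrite /D in Dj; move=> h1 h2; have : M <= j by lia.
      move=> /h1 h3; lia.
  have HD : forall j, i0 <= j -> D j = d.
    elim=> [|j IH] Hj; first by move: Hj; rewrite leqn0 => /eqP <-.
    case: (eqVneq i0 j.+1) => [<-//|ne].
    have Hj' : i0 <= j by lia.
    exact: (proj1 (Hst j Hj' (IH Hj'))).
  apply: Fdet; exists i0 => j Hj.
  exact: (proj2 (Hst j Hj (HD j Hj))).
Qed.

End Inf.

End Pf.

Theorem theorem13 (Q : QNP) (R : realType) (pi : fpolicy (TQ Q)) :
  strong_cyclic pi -> controller_solves R pi.
Proof.
move=> Hsc eps epos f len [Hex Heps] Hmax.
case: len Hex Heps Hmax => [n|] Hex Heps Hmax.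
- case: Hmax => [[Hg _]|Hnb]; first by exists n; split; [rewrite /= leqnn|].
  apply: NNPP => Hno.
  have Hng : forall j, j <= n -> ~ qgoal (f j).1 by move=> j Hj Hg; apply: Hno; exists j.
  have Hr := exec_reach Hex (i:=n) (leqnn n) (fun j Hj => Hng j (ltnW Hj)).
  have [g [Hrg Hgg]] := Hsc _ _ (exec_init Hex) Hr.
  case: (clos_rt_rt1n _ _ _ _ Hrg) Hgg => [|y z Hst _] Hgg.
    exact: (Hng n (leqnn n) Hgg).
  case: Hst => _ [a [Ha [Happ _]]]; apply: Hnb; by exists a.
- exfalso; apply: (Finf _ _ _ Hsc _ epos _ Hex) => i; first [exact: (Heps i I) | exact: (Hmax i)].
Qed.
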